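(* Let $p>2$ be a prime and $m\geq3$ an integer with $\gcd(p,m)=1$. Let $u$ be the multiplicative order of $p$ modulo $2m$. Let $\zeta_4$ and $\zeta_{2m}$ be a primitive $4$-th and a primitive $2m$-th root of unity, respectively, in an algebraic closure of $\mathbb{Z}_p$, let $s$ be an integer with $\gcd(s,m)=1$, and let $\delta$ be the degree of the minimal polynomial of $\zeta_4(\zeta_{2m}^s+\zeta_{2m}^{-s})$ over $\mathbb{Z}_p$. Then: - $\delta=u/2$ if ($p\equiv1\pmod4$, $u$ even, and $p^{u/2}\equiv-1\pmod{2m}$), or ($p\equiv3\pmod4$, $u\equiv0\pmod4$, and $p^{u/2}\equiv-1\pmod{2m}$), or ($p\equiv3\pmod4$, $u\equiv2\pmod4$, and $p^{u/2}\equiv m\pm1\pmod{2m}$); - $\delta=u$ if ($p\equiv1\pmod4$, $u$ even, and $p^{u/2}\not\equiv-1\pmod{2m}$), or ($p\equiv1\pmod4$ and $u$ odd), or ($p\equiv3\pmod4$, $u\equiv0\pmod4$, and $p^{u/2}\not\equiv-1\pmod{2m}$), or ($p\equiv3\pmod4$, $u\equiv2\pmod4$, and $p^{u/2}\not\equiv m\pm1\pmod{2m}$); - $\delta=2u$ if $p\equiv3\pmod4$ and $u$ is odd.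
   Context: $\mathbb{Z}_p$ denotes the field with $p$ elements. (For orientation: the elements $\zeta_4(\zeta_{2m}^s+\zeta_{2m}^{-s})$ with $1\le s\le m$, $\gcd(s,m)=1$, are the roots of the reduction modulo $p$ of the fibotomic polynomial $\Psi_m(x)=\prod_{1\le s\le m,\ \gcd(s,m)=1}(x-2i\cos(\pi s/m))$.) *)

(* Defs.v *)
From HB Require Import structures.
From mathcomp Require Import all_boot all_order all_algebra all_field.
Set Implicit Arguments. Unset Strict Implicit. Unset Printing Implicit Defensive.
Import GRing.Theory.
Local Open Scope ring_scope.

Definition is_mult_order (u a n : nat) : Prop :=
  [/\ (0 < u)%N, (a ^ u = 1 %[mod n])%N &
      forall k : nat, (0 < k)%N -> (a ^ k = 1 %[mod n])%N -> (u <= k)%N].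

(* degree of the minimal polynomial of x over the base field F
   (the prime subfield 1 of the extension L) *)
Definition minpoly_degree (F : fieldType) (L : fieldExtType F) (x : L) : nat :=
  adjoin_degree 1%AS x.

(* Main.v *)
Require Import Defs.
From HB Require Import structures.
From mathcomp Require Import all_boot all_order all_algebra all_field.
From mathcomp Require Import ring zify.
Import GRing.Theory.
Local Open Scope ring_scope.

Lemma inv_sum_eq (F : fieldType) (a b : F) : a != 0 -> b != 0 ->
  (a + a^-1 == b + b^-1) = (a == b) || (a == b^-1).
Proof.
move=> a0 b0.
have E : a + a^-1 - (b + b^-1) = (a - b) * (1 - (a * b)^-1).
  by field; rewrite b0 a0.
rewrite -subr_eq0 E mulf_eq0 !subr_eq0; congr (_ || _).
rewrite eq_sym invr_eq1; apply/eqP/eqP => [h|->]; [by rewrite -(mulfK b0 a) h mul1r | by rewrite mulVf].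
Qed.

Definition Dq (q m : nat) : bool :=
  (((q %% 4 == 1) && ((q %% (2 * m) == 1) || (q %% (2 * m) == 2 * m - 1))) ||
  ((q %% 4 == 3) && ((q %% (2 * m) == m+1) || (q %% (2 * m) == m-1))))%N.

Lemma DqP q m : Dq q m <->
  ((q %% 4 = 1 /\ (q %% (2 * m) = 1 \/ q %% (2 * m) = 2 * m - 1)) \/
   (q %% 4 = 3 /\ (q %% (2 * m) = m + 1 \/ q %% (2 * m) = m - 1)))%N.
Proof.
rewrite /Dq; do 6 case: eqP => ?; rewrite /=; split => //; lia.
Qed.

Lemma oddE n : odd n = (n %% 2 == 1)%N.
Proof. by rewrite modn2; case: odd. Qed.

Lemma pow4 p d : odd p ->
  (p ^ d %% 4 = if p %% 4 == 1 then 1 else if odd d then 3 else 1)%N.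
Proof.
move=> op; rewrite -modnXm.
have : (p %% 4 = 1 \/ p %% 4 = 3)%N.
  have := odd_mod p (erefl (odd 4)); rewrite op.
  have := ltn_pmod p (isT : (0 < 4)%N); move: (p %% 4)%N => r.
  by case: r => [|[|[|[|r]]]] //= _ _; [left|right].
case=> ->; first by rewrite exp1n.
rewrite /=; elim: d => [|d IH] //.
by rewrite expnS -modnMmr IH /=; case: odd.
Qed.
Lemma pow_mod p N u k : (1 < N)%N -> is_mult_order u p N ->
  (p ^ k %% N = p ^ (k %% u) %% N)%N.
Proof.
move=> N1 [u0 pu _].
rewrite {1}(divn_eq k u) expnD -modnMml [(k %/ u * u)%N]mulnC expnM.
rewrite -(modnXm (k %/ u)) pu (modn_small N1) exp1n (modn_small N1) mul1n.
by [].
Qed.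

Lemma ord1 p N u k : (1 < N)%N -> is_mult_order u p N ->
  (p ^ k %% N = 1 <-> u %| k)%N.
Proof.
move=> N1 hu; have [u0 pu umin] := hu.
rewrite (pow_mod p N u k N1 hu) /dvdn; split; last first.
  by move/eqP ->; rewrite expn0 modn_small.
move=> h; apply/negPn/negP => r0.
have : (u <= k %% u)%N.
  apply: umin; first by rewrite lt0n.
  by rewrite h (modn_small N1).
by rewrite leqNgt ltn_pmod.
Qed.

Lemma sq_one p m u d : odd p -> (3 <= m)%N -> is_mult_order u p (2 * m) ->
  Dq (p ^ d) m -> (u %| 2 * d)%N.
Proof.
move=> op m3 hu /DqP hD.
have N1 : (1 < 2 * m)%N by lia.
apply/(ord1 p (2 * m) u (2 * d) N1 hu); rewrite mulnC expnM -modnXm.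
have oddr : odd (p ^ d %% (2 * m)).
  rewrite odd_mod; [by rewrite oddX op orbT | by rewrite oddM].
move: oddr hD; set r := (p ^ d %% (2 * m))%N => oddr hD.
have [k mk] : exists k, (m = 2 * k \/ m = 2 * k + 1)%N.
  exists m./2; have := odd_double_half m; rewrite -mul2n.
  by case: odd => /= h; lia.
have hr : (r = 1 \/ r = 2 * m - 1 \/ (m = 2 * k /\ (r = m + 1 \/ r = m - 1)))%N.
  move: oddr; rewrite oddE; lia.
case: hr => [->|[->|[mk' [->|->]]]].
- by rewrite modn_small.
- have [n ->] : exists n, m = (n + 3)%N by exists (m - 3)%N; lia.
  have -> : (2 * (n + 3) - 1 = 2 * n + 5)%N by lia.
  have -> : ((2 * n + 5) ^ 2 = (2 * n + 4) * (2 * (n + 3)) + 1)%N by ring.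
  by rewrite modnMDl modn_small //; lia.
- rewrite mk'.
  have -> : ((2 * k + 1) ^ 2 = (k + 1) * (2 * (2 * k)) + 1)%N by ring.
  by rewrite modnMDl modn_small //; lia.
- have [j kj] : exists j, k = (j + 2)%N by exists (k - 2)%N; lia.
  rewrite mk' kj.
  have -> : (2 * (j + 2) - 1 = 2 * j + 3)%N by lia.
  have -> : ((2 * j + 3) ^ 2 = (j + 1) * (2 * (2 * (j + 2))) + 1)%N by ring.
  by rewrite modnMDl modn_small //; lia.
Qed.

Definition isMin p m T := [/\ (0 < T)%N, Dq (p ^ T) m &
  forall d, (0 < d)%N -> Dq (p ^ d) m -> (T <= d)%N].

Section NT.
Variables (p m u : nat).
Hypotheses (pr : prime p) (p2 : (2 < p)%N) (m3 : (3 <= m)%N)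
  (hu : is_mult_order u p (2 * m)).

Lemma op : odd p.
Proof. by case: (even_prime pr) => // p2'; move: p2; rewrite p2'. Qed.

Lemma u0 : (0 < u)%N.
Proof. by case: hu. Qed.

Lemma N1 : (1 < 2 * m)%N.
Proof. lia. Qed.

Lemma O1 k : (p ^ k %% (2 * m) = 1 <-> u %| k)%N.
Proof. exact: (ord1 p (2 * m) u k N1 hu). Qed.

Lemma G d : Dq (p ^ d) m -> (u %| 2 * d)%N.
Proof. exact: (sq_one p m u d op m3 hu). Qed.

Lemma half d : (u %| 2 * d)%N -> (0 < d)%N -> (d < u)%N -> (2 * d = u)%N.
Proof.
case/dvdnP => k hk d0 du.
have k0 : (0 < k)%N by move: hk; case: k => [|k] hk; lia.
have k2 : (k < 2)%N.
  by rewrite -(ltn_pmul2r u0) -hk; lia.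
have k1 : k = 1%N by lia.
by rewrite hk k1 mul1n.
Qed.

Lemma leu d : (0 < d)%N -> Dq (p ^ d) m -> (u <= 2 * d)%N.
Proof. by move=> d0 /G /dvdn_leq; apply; lia. Qed.

Let h := (p ^ (u %/ 2) %% (2 * m))%N.

Lemma P4' d : (p ^ d %% 4 = if p %% 4 == 1 then 1 else if odd d then 3 else 1)%N.
Proof. exact: (pow4 p d op). Qed.

Lemma caseA1 : (p %% 4 = 1)%N -> ~~ odd u -> h = (2 * m - 1)%N -> isMin p m (u %/ 2).
Proof.
move=> p4 ue hh; have := u0; move: ue; rewrite oddE => ue u0'.
split; first lia.
- by apply/DqP; left; rewrite P4' p4; split => //; right.
- move=> d d0 D; have := leu _ d0 D; lia.
Qed.

Lemma caseA2 : (p %% 4 = 1)%N -> ~~ odd u -> h <> (2 * m - 1)%N -> isMin p m u.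
Proof.
move=> p4 ue hh; split; first exact: u0.
- by apply/DqP; left; rewrite P4' p4; split => //; left; apply/O1.
- move=> d d0 D; rewrite leqNgt; apply/negP => du.
  have e := half _ (G _ D) d0 du.
  move/DqP: D; rewrite P4' p4 /=; case => [[_ [/O1 r|r]]|[]]; last by [].
  + by have := dvdn_leq d0 r; lia.
  + apply: hh; rewrite /h; have -> : (u %/ 2 = d)%N by lia.
    exact: r.
Qed.

Lemma caseA3 : (p %% 4 = 1)%N -> odd u -> isMin p m u.
Proof.
move=> p4 uo; split; first exact: u0.
- by apply/DqP; left; rewrite P4' p4; split => //; left; apply/O1.
- move=> d d0 D; rewrite leqNgt; apply/negP => du.
  have e := half _ (G _ D) d0 du.
  by move: uo; rewrite -e oddM.
Qed.

Lemma caseB1 : (p %% 4 = 3)%N -> (u %% 4 = 0)%N -> h = (2 * m - 1)%N ->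
  isMin p m (u %/ 2).
Proof.
move=> p4 u4 hh; have := u0 => u0'.
split; first lia.
- apply/DqP; left; rewrite P4' p4 /=.
  have -> : odd (u %/ 2) = false by rewrite oddE; apply/eqP; lia.
  by split => //; right.
- move=> d d0 D; have := leu _ d0 D; lia.
Qed.

Lemma caseB2 : (p %% 4 = 3)%N -> (u %% 4 = 0)%N -> h <> (2 * m - 1)%N ->
  isMin p m u.
Proof.
move=> p4 u4 hh; split; first exact: u0.
- apply/DqP; left; rewrite P4' p4 /=.
  have -> : odd u = false by rewrite oddE; apply/eqP; lia.
  by split => //; left; apply/O1.
- move=> d d0 D; rewrite leqNgt; apply/negP => du.
  have e := half _ (G _ D) d0 du.
  have od : odd d = false by rewrite oddE; apply/eqP; lia.
  move/DqP: D; rewrite P4' p4 od /=; case => [[_ [/O1 r|r]]|[]]; last by [].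
  + by have := dvdn_leq d0 r; lia.
  + apply: hh; rewrite /h; have -> : (u %/ 2 = d)%N by lia.
    exact: r.
Qed.

Lemma caseB3 : (p %% 4 = 3)%N -> (u %% 4 = 2)%N -> (h = m + 1 \/ h = m - 1)%N ->
  isMin p m (u %/ 2).
Proof.
move=> p4 u4 hh; have := u0 => u0'.
split; first lia.
- apply/DqP; right; rewrite P4' p4 /=.
  have -> : odd (u %/ 2) = true by rewrite oddE; apply/eqP; lia.
  by split.
- move=> d d0 D; have := leu _ d0 D; lia.
Qed.

Lemma caseB4 : (p %% 4 = 3)%N -> (u %% 4 = 2)%N -> h <> (m + 1)%N -> h <> (m - 1)%N ->
  isMin p m u.
Proof.
move=> p4 u4 h1 h2; split; first exact: u0.
- apply/DqP; left; rewrite P4' p4 /=.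
  have -> : odd u = false by rewrite oddE; apply/eqP; lia.
  by split => //; left; apply/O1.
- move=> d d0 D; rewrite leqNgt; apply/negP => du.
  have e := half _ (G _ D) d0 du.
  have od : odd d = true by rewrite oddE; apply/eqP; lia.
  have ud : (u %/ 2 = d)%N by lia.
  move/DqP: D; rewrite P4' p4 od /=; case => [[]|[_ [r|r]]] //.
  + by apply: h1; rewrite /h ud.
  + by apply: h2; rewrite /h ud.
Qed.

Lemma caseC : (p %% 4 = 3)%N -> odd u -> isMin p m (2 * u).
Proof.
move=> p4 uo; have := u0 => u0'; split; first lia.
- apply/DqP; left; rewrite P4' p4 /= oddM /=.
  by split => //; left; apply/O1; apply: dvdn_mull.
- move=> d d0 D; rewrite leqNgt; apply/negP => du.
  have ud : (u %| d)%N.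
    by rewrite -(@Gauss_dvdr u 2 d) ?coprimen2 //; apply: G.
  have e : d = u.
    case/dvdnP: ud => k hk.
    have k0 : (0 < k)%N by case: k hk => [|k] hk //; lia.
    have k2 : (k < 2)%N by rewrite -(ltn_pmul2r u0) -hk.
    have k1 : k = 1%N by lia.
    by rewrite hk k1 mul1n.
  subst d; move/DqP: D; rewrite P4' p4 uo /=; case => [[]|[_ r]] //.
  have : (p ^ u %% (2 * m) = 1)%N by apply/O1.
  lia.
Qed.

End NT.

Lemma prim_half (L : fieldType) n (w : L) : (0 < n)%N -> (2 * n).-primitive_root w -> w ^+ n = -1.
Proof.
move=> n0 pw; have : (w ^+ n) ^+ 2 == 1.
  by rewrite -exprM mulnC prim_expr_order.
rewrite sqrf_eq1 => /orP [/eqP h|/eqP //].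
have := eq_prim_root_expr pw n 0; rewrite h expr0 eqxx => /esym.
by rewrite mod0n modn_small ?eqn0Ngt ?n0 //; lia.
Qed.

Lemma zs_abs (L : fieldType) (z : L) (s : int) :
  exists n : nat, (`|s|%N = n) /\ z ^ s + z ^ (- s) = z ^+ n + (z ^+ n)^-1.
Proof.
case: s => n.
  by exists n; split => //; rewrite -invr_expz.
exists n.+1; split => //.
by rewrite NegzE -invr_expz opprK addrC.
Qed.

Lemma zs_norm (L : fieldType) (m : nat) (z : L) (s : int) : (3 <= m)%N ->
  (2 * m).-primitive_root z -> coprimez s m ->
  exists w sg, [/\ (2 * m).-primitive_root w, sg = 1 \/ sg = -1 &
     z ^ s + z ^ (- s) = sg * (w + w^-1)].
Proof.
move=> m3 pz cs.
have [n [ns ->]] := zs_abs _ z s.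
have cn : coprime n m by move: cs; rewrite /coprimez /gcdz ns.
have [no|ne] := boolP (odd n).
  exists (z ^+ n), 1; split; last by rewrite mul1r.
  - by rewrite (prim_root_exp_coprime _ pz) coprimeMr coprimen2 no.
  - by left.
have mo : odd m.
  apply/negPn/negP => me; move: cn; rewrite /coprime.
  have : (2 %| gcdn n m)%N by rewrite dvdn_gcd !dvdn2 ne me.
  by move=> h /eqP e; rewrite e in h.
exists (z ^+ (n + m)), (-1); split; last 2 first.
- by right.
- rewrite exprD (@prim_half _ m z _ pz); last lia.
  by rewrite mulrN1 invrN mulN1r opprD !opprK.
rewrite (prim_root_exp_coprime _ pz) coprimeMr coprimen2 oddD (negbTE ne) mo /=.
by rewrite coprime_sym /coprime gcdnDr -/(coprime m n) coprime_sym.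
Qed.

Section FrobPow.
Variables (p : nat) (L : fieldExtType 'F_p).
Hypothesis pr : prime p.

Lemma pcharL : p \in [pchar L].
Proof. by rewrite (pchar_lalg L) pchar_Fp. Qed.

Lemma frobD d (a b : L) : (a + b) ^+ (p ^ d) = a ^+ (p ^ d) + b ^+ (p ^ d).
Proof.
apply: exprDn_pchar; rewrite (eq_pnat _ (pcharf_eq pcharL)).
by rewrite pnatX pnat_id.
Qed.

Lemma fix1 d (a : L) : a \in 1%VS -> a ^+ (p ^ d) = a.
Proof.
move=> a1; have := Fermat's_little_theorem (1%AS : {subfield L}) a.
rewrite a1 /= dimv1 expn1 card_Fp // => /esym/eqP ha.
elim: d => [|d IH]; first by rewrite expr1.
by rewrite expnSr exprM IH.
Qed.

Lemma degP (x : L) :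
  [/\ (0 < minpoly_degree x)%N, x ^+ (p ^ minpoly_degree x) = x &
    forall d, (0 < d)%N -> x ^+ (p ^ d) = x -> (minpoly_degree x <= d)%N].
Proof.
have dimE : \dim <<1; x>> = minpoly_degree x.
  by rewrite /minpoly_degree (dim_Fadjoin (1%AS : {subfield L})) dimv1 muln1.
split.
- by rewrite /minpoly_degree /adjoin_degree.
- have := Fermat's_little_theorem (<<1; x>>%AS : {subfield L}) x.
  by rewrite memv_adjoin /= card_Fp // dimE => /esym/eqP.
move=> d d0 hx.
set N := (p ^ d)%N.
have N2 : (2 <= N)%N.
  apply: (leq_trans (prime_gt1 pr)); by rewrite /N -{1}(expn1 p) leq_pexp2l ?(prime_gt0 pr).
pose f (y : L) := y ^+ N.
have fA : zmod_morphism f.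
  move=> a b; apply: (addIr (f b)); rewrite /f -frobD subrK.
  by rewrite addrNK.
have fM : monoid_morphism f.
  by rewrite /f; split=> [|a b]; rewrite ?exprMn ?expr1n.
pose faM := GRing.isZmodMorphism.Build _ _ f fA.
pose fmM := GRing.isMonoidMorphism.Build _ _ f fM.
pose fR : {rmorphism L -> L} := HB.pack f faM fmM.
have fE y : fR y = y ^+ N by [].
have Efix y : y \in <<1; x>>%VS -> y ^+ N = y.
  move=> yE; rewrite -(Fadjoin_poly_eq yE).
  set q := Fadjoin_poly _ x y.
  have -> : q.[x] ^+ N = fR q.[x] by [].
  rewrite -horner_map /= map_poly_id; first by rewrite /f hx.
  move=> c /(nthP 0) [i _ <-].
  rewrite /f fix1 //.
  exact: (polyOverP (Fadjoin_polyOver 1%VS x y)).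
pose V : {vspace finvect_type L} := <<1; x>>%VS.
have cV : #|V| = (p ^ minpoly_degree x)%N.
  by rewrite card_vspace card_Fp // -dimE.
rewrite -(leq_exp2l _ _ (prime_gt1 pr)) -cV -/N.
pose P : {poly L} := 'X^N - 'X.
have sP : size P = N.+1.
  rewrite /P size_polyDl ?size_polyXn // size_polyN size_polyX ltnS //.
have P0 : P != 0 by rewrite -size_poly_eq0 sP.
have := max_poly_roots P0 (_ : all (root P) (enum V)) (enum_uniq _).
rewrite sP ltnS cardE; apply.
apply/allP => y yV.
move: yV; rewrite (@mem_enum _ V y) => yV.
by rewrite /root /P !hornerE Efix // subrr.
Qed.

Lemma prim_neq0 n (w : L) : (0 < n)%N -> n.-primitive_root w -> w != 0.
Proof.
move=> n0 pw; apply/eqP => w0; have := prim_expr_order pw.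
by rewrite w0 expr0n eqn0Ngt n0 /= => /eqP; rewrite eq_sym oner_eq0.
Qed.

Lemma core (m : nat) (z4 w : L) (d : nat) : (2 < p)%N -> (3 <= m)%N ->
  4.-primitive_root z4 -> (2 * m).-primitive_root w ->
  ((z4 * (w + w^-1)) ^+ (p ^ d) == z4 * (w + w^-1)) = Dq (p ^ d) m.
Proof.
move=> p2 m3 pz pw.
set q := (p ^ d)%N; set N := (2 * m)%N.
have w0 : w != 0 by apply: (@prim_neq0 N w) => //; rewrite /N; lia.
have z0 : z4 != 0 by apply: (@prim_neq0 4 z4).
have z2 : z4 ^+ 2 = -1 by apply: (@prim_half _ 2 z4).
have wm : w ^+ m = -1 by apply: (@prim_half _ m w) => //; lia.
have wN : w ^+ N = 1 := prim_expr_order pw.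
have wV : w^-1 = w ^+ (N - 1).
  apply: (mulfI w0); rewrite divff // -exprS -wN; congr (_ ^+ _); lia.
have qodd : odd q.
  rewrite /q oddX; case: (even_prime pr) => [p2'|->]; last by rewrite orbT.
  by rewrite p2' in p2.
have wq0 : w ^+ q != 0 by rewrite expf_neq0.
have cq : (z4 * (w + w^-1)) ^+ q = z4 ^+ (q %% 4) * (w ^+ q + (w ^+ q)^-1).
  by rewrite exprMn (prim_expr_mod pz) frobD exprVn.
have key (j : nat) : (w ^+ q == w ^+ j) = (q %% N == j %% N)%N.
  by rewrite (eq_prim_root_expr pw).
have q4 : (q %% 4 = 1 \/ q %% 4 = 3)%N.
  have := odd_mod q (erefl (odd 4)); rewrite qodd.
  have := ltn_pmod q (isT : (0 < 4)%N); move: (q %% 4)%N => r.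
  by case: r => [|[|[|[|r]]]] //= _ _; [left|right].
rewrite cq /Dq -/N; case: q4 => ->; rewrite /=.
- rewrite (inj_eq (mulfI z0)) inv_sum_eq // wV key.
  rewrite -[X in _ == X](expr1 w) key orbF.
  by rewrite (@modn_small 1 N) ?(@modn_small (N - 1) N) //; rewrite /N; lia.
- have -> : z4 ^+ 3 = - z4 by rewrite exprS z2 mulrN1.
  rewrite mulNr eqr_oppLR -mulrN (inj_eq (mulfI z0)) opprD -invrN.
  rewrite inv_sum_eq ?oppr_eq0 // invrN wV.
  have -> : - w = w ^+ (m + 1) by rewrite exprD wm expr1 mulN1r.
  have -> : - w ^+ (N - 1) = w ^+ (m + (N - 1)) by rewrite exprD wm mulN1r.
  rewrite !key; congr (_ || _); congr (_ == _).
    by rewrite modn_small //; lia.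
  have -> : (m + (N - 1) = (m - 1) + N)%N by lia.
  by rewrite modnDr modn_small //; lia.
Qed.

End FrobPow.

Theorem mainTheorem15 (p m u : nat) (s : int)
  (L : fieldExtType 'F_p) (z4 z : L) :
  prime p -> (2 < p)%N -> (3 <= m)%N -> coprime p m ->
  is_mult_order u p (2 * m) ->
  4.-primitive_root z4 -> (2 * m)%N.-primitive_root z ->
  coprimez s m ->
  let delta := minpoly_degree (z4 * (z ^ s + z ^ (- s))) in
  let h := (p ^ (u %/ 2) %% (2 * m))%N in
  [/\ ([\/ [&& p %% 4 == 1, ~~ odd u & h == 2 * m - 1]%N,
           [&& p %% 4 == 3, u %% 4 == 0 & h == 2 * m - 1]%N
         | [&& p %% 4 == 3, u %% 4 == 2 & (h == m + 1) || (h == m - 1)]%N]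
         -> delta = (u %/ 2)%N),
      ([\/ [&& p %% 4 == 1, ~~ odd u & h != 2 * m - 1]%N,
           (p %% 4 == 1)%N && odd u,
           [&& p %% 4 == 3, u %% 4 == 0 & h != 2 * m - 1]%N
         | [&& p %% 4 == 3, u %% 4 == 2 & (h != m + 1) && (h != m - 1)]%N]
         -> delta = u)
    & ((p %% 4 == 3)%N && odd u -> delta = (2 * u)%N)].
Proof.
move=> pr p2 m3 cpm hu pz4 pz cs delta h.
have opp : odd p by case: (even_prime pr) => // e; move: p2; rewrite e.
have [w [sg [pw sgE xE]]] := @zs_norm _ m z s m3 pz cs.
have sg0 : sg != 0 by case: sgE => ->; rewrite ?oppr_eq0 oner_eq0.
have key d : ((z4 * (z ^ s + z ^ (- s))) ^+ (p ^ d) == z4 * (z ^ s + z ^ (- s)))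
    = Dq (p ^ d) m.
  have sgq : sg ^+ (p ^ d) = sg.
    case: sgE => ->; first exact: expr1n.
    by rewrite -signr_odd oddX opp orbT.
  rewrite xE mulrCA exprMn sgq (inj_eq (mulfI sg0)).
  exact: core.
have degT T : isMin p m T -> delta = T.
  case=> T0 DT Tmin; have [d0 dx dmin] := @degP p L pr (z4 * (z ^ s + z ^ (- s))).
  apply/eqP; rewrite eqn_leq; apply/andP; split.
  - by apply: dmin => //; apply/eqP; rewrite key.
  - by apply: Tmin => //; rewrite -key dx.
split.
- case => /and3P [/eqP p4 u4 hh]; apply: degT.
  + by apply: caseA1 => //; apply/eqP.
  + by apply: caseB1 => //; apply/eqP.
  + by apply: caseB3 => //; [apply/eqP | case/orP: hh => /eqP; [left|right]].
- case.
  + case/and3P => /eqP p4 ue hh; apply: degT.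
    by apply: caseA2 => // /eqP; rewrite (negbTE hh).
  + case/andP => /eqP p4 uo; apply: degT.
    exact: caseA3.
  + case/and3P => /eqP p4 /eqP u4 hh; apply: degT.
    by apply: caseB2 => // /eqP; rewrite (negbTE hh).
  + case/and3P => /eqP p4 /eqP u4 /andP [h1 h2]; apply: degT.
    by apply: caseB4 => // /eqP; [rewrite (negbTE h1) | rewrite (negbTE h2)].
- case/andP => /eqP p4 uo; apply: degT.
  exact: caseC.
Qed.
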